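(* Let $G$ be a group. Then the categories $\mathrm{Act}(G)$, $\mathrm{bAct}(G)$, $\mathrm{Act}_l(G)$ and $\mathrm{Act}_r(G)$ are all equivalent to each other, and the categories $\mathrm{ACT}(G)$, $\mathrm{bACT}(G)$, $\mathrm{ACT}_l(G)$ and $\mathrm{ACT}_r(G)$ are all equivalent to each other.
   Context: For a set $X$, $\mathrm{End}_l(X)$ denotes self-maps of $X$ written on the left with product $f\circ g$ ($g$ first); $\mathrm{End}_r(X)$ denotes self-maps written on the right, $x\mapsto(x)f$, with $(x)(fg)=((x)f)g$. For a semigroup (resp. monoid) $I$, an $I$-set is a set $X$ with a pair $\xi=(\xi_l,\xi_r)$ of semigroup (resp. monoid) homomorphisms $\xi_l:I\to\mathrm{End}_l(X)$, $\xi_r:I\to\mathrm{End}_r(X)$ with $(\xi_l(i)(x))\xi_r(j)=\xi_l(i)((x)\xi_r(j))$ for all $i,j,x$. A function $f:X\to Y$ between $I$-sets $(X,\xi)$, $(Y,\eta)$ is $I$-equivariant if $(f(\xi_l(i)(x)))\eta_r(i)=\eta_l(i)(f((x)\xi_r(i)))$ for all $i,x$. An $I$-set is semi-invertible if for every $i$ at least one of $\xi_l(i)$, $\xi_r(i)$ is bijective; it is invertible on one side if either $\xi_l(i)$ is bijective for all $i$ or $\xi_r(i)$ is bijective for all $i$. $\mathrm{ACT}(I)$ (resp. $\mathrm{Act}(I)$) is the category whose objects are $I$-sets (resp. finite $I$-sets) that are products (with componentwise action) of semi-invertible $I$-sets, and $\mathrm{bACT}(I)$ (resp. $\mathrm{bAct}(I)$)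 is the category whose objects are $I$-sets (resp. finite $I$-sets) that are products of $I$-sets invertible on one side; in all four, morphisms are $I$-equivariant functions. $\mathrm{ACT}_l(I)$, $\mathrm{ACT}_r(I)$, $\mathrm{Act}_l(I)$, $\mathrm{Act}_r(I)$ denote the usual categories of left $I$-sets, right $I$-sets, finite left $I$-sets and finite right $I$-sets (single actions in the usual sense), with the usual equivariant maps. *)

(* Defs.v *)
From Stdlib Require Import List ProofIrrelevance.

Record Group := {
  gcar :> Type;
  gmul : gcar -> gcar -> gcar;
  gone : gcar;
  ginv : gcar -> gcar;
  gassoc : forall a b c, gmul a (gmul b c) = gmul (gmul a b) c;
  gmul1l : forall a, gmul gone a = a;
  gmul1r : forall a, gmul a gone = a;
  gmulVl : forall a, gmul (ginv a) a = gone;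
  gmulVr : forall a, gmul a (ginv a) = gone
}.

Definition bijective {A B : Type} (f : A -> B) : Prop :=
  exists g : B -> A, (forall x, g (f x) = x) /\ (forall y, f (g y) = y).

Definition finite_type (A : Type) : Prop :=
  exists l : list A, forall x : A, In x l.

(* ---------- I-sets for I = G viewed as a monoid ----------
   il i  is xi_l(i) in End_l(X): il (i*j) = il i o il j   (j first).
   ir i  is xi_r(i) in End_r(X), written x |-> (x)xi_r(i):
         (x)xi_r(i j) = ((x)xi_r(i))xi_r(j), i.e. ir (i*j) x = ir j (ir i x). *)
Record ISet (G : Group) := {
  icar : Type;
  il : G -> icar -> icar;
  ir : G -> icar -> icar;
  il_one : forall x, il (gone G) x = x;
  il_mul : forall i j x, il (gmul G i j) x = il i (il j x);
  ir_one : forall x, ir (gone G) x = x;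
  ir_mul : forall i j x, ir (gmul G i j) x = ir j (ir i x);
  il_ir : forall i j x, ir j (il i x) = il i (ir j x)
}.
Arguments icar {G}.
Arguments il {G}.
Arguments ir {G}.

Definition iequivariant {G : Group} (X Y : ISet G) (f : icar X -> icar Y) : Prop :=
  forall (i : G) (x : icar X), ir Y i (f (il X i x)) = il Y i (f (ir X i x)).

Definition semi_invertible {G : Group} (X : ISet G) : Prop :=
  forall i : G, bijective (il X i) \/ bijective (ir X i).

Definition invertible_one_side {G : Group} (X : ISet G) : Prop :=
  (forall i : G, bijective (il X i)) \/ (forall i : G, bijective (ir X i)).

Definition is_product_of {G : Group} (P : ISet G -> Prop) (X : ISet G) : Prop :=
  exists (J : Type) (Y : J -> ISet G) (phi : icar X -> forall j, icar (Y j)),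
    (forall j, P (Y j)) /\ bijective phi /\
    (forall i x, phi (il X i x) = (fun j => il (Y j) i (phi x j))) /\
    (forall i x, phi (ir X i x) = (fun j => ir (Y j) i (phi x j))).

Record LSet (G : Group) := {
  lcar : Type;
  lact : G -> lcar -> lcar;
  lact_one : forall x, lact (gone G) x = x;
  lact_mul : forall g h x, lact (gmul G g h) x = lact g (lact h x)
}.
Arguments lcar {G}.
Arguments lact {G}.

Record RSet (G : Group) := {
  rcar : Type;
  ract : G -> rcar -> rcar;    (* ract g x is (x)g *)
  ract_one : forall x, ract (gone G) x = x;
  ract_mul : forall g h x, ract (gmul G g h) x = ract h (ract g x)
}.
Arguments rcar {G}.
Arguments ract {G}.

Record Category := {
  Ob : Type;
  Hom : Ob -> Ob -> Type;
  idm : forall A, Hom A A;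
  comp : forall A B C, Hom B C -> Hom A B -> Hom A C;
  comp_id_l : forall A B (f : Hom A B), comp A B B (idm B) f = f;
  comp_id_r : forall A B (f : Hom A B), comp A A B f (idm A) = f;
  comp_assoc : forall A B C D (f : Hom A B) (g : Hom B C) (h : Hom C D),
      comp A B D (comp B C D h g) f = comp A C D h (comp A B C g f)
}.
Arguments Hom {c}.
Arguments idm {c}.
Arguments comp {c A B C}.

Record Functor (C D : Category) := {
  fobj : Ob C -> Ob D;
  fmap : forall A B, Hom A B -> Hom (fobj A) (fobj B);
  fmap_id : forall A, fmap A A (idm A) = idm (fobj A);
  fmap_comp : forall A B E (f : Hom A B) (g : Hom B E),
      fmap A E (comp g f) = comp (fmap B E g) (fmap A B f)
}.
Arguments fobj {C D}.
Arguments fmap {C D} _ {A B}.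

Definition id_functor (C : Category) : Functor C C.
Proof.
  refine {| fobj := fun A => A; fmap := fun A B f => f |}; reflexivity.
Defined.

Definition comp_functor {C D E : Category} (G : Functor D E) (F : Functor C D)
  : Functor C E.
Proof.
  refine {| fobj := fun A => fobj G (fobj F A);
            fmap := fun A B f => fmap G (fmap F f) |}.
  - intros A. rewrite (fmap_id _ _ F), (fmap_id _ _ G). reflexivity.
  - intros A B X f g. rewrite (fmap_comp _ _ F), (fmap_comp _ _ G). reflexivity.
Defined.

Definition nat_iso {C D : Category} (F G : Functor C D) : Prop :=
  exists (alpha : forall A, Hom (fobj F A) (fobj G A))
         (beta : forall A, Hom (fobj G A) (fobj F A)),
    (forall A, comp (alpha A) (beta A) = idm (fobj G A)) /\
    (forall A, comp (beta A) (alpha A) = idm (fobj F A)) /\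
    (forall A B (f : Hom A B), comp (fmap G f) (alpha A) = comp (alpha B) (fmap F f)).

Definition equivalent_cats (C D : Category) : Prop :=
  exists (F : Functor C D) (G : Functor D C),
    nat_iso (comp_functor G F) (id_functor C) /\
    nat_iso (comp_functor F G) (id_functor D).

Definition mkConcrete (O : Type) (car : O -> Type)
  (H : forall A B : O, (car A -> car B) -> Prop)
  (Hid : forall A, H A A (fun x => x))
  (Hcomp : forall A B C (f : car A -> car B) (g : car B -> car C),
      H A B f -> H B C g -> H A C (fun x => g (f x))) : Category.
Proof.
  refine {| Ob := O;
            Hom := fun A B => { f : car A -> car B | H A B f };
            idm := fun A => exist _ (fun x => x) (Hid A);
            comp := fun A B C g f =>
                      exist _ (fun x => proj1_sig g (proj1_sig f x))
                        (Hcomp A B C _ _ (proj2_sig f) (proj2_sig g)) |}.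
  - intros A B [f Hf]. apply subset_eq_compat. reflexivity.
  - intros A B [f Hf]. apply subset_eq_compat. reflexivity.
  - intros A B C D [f Hf] [g Hg] [h Hh]. apply subset_eq_compat. reflexivity.
Defined.

Lemma iequivariant_id {G : Group} (X : ISet G) : iequivariant X X (fun x => x).
Proof. intros i x. apply il_ir. Qed.

Lemma ir_inv_l {G : Group} (X : ISet G) (i : G) (x : icar X) :
  ir X (ginv G i) (ir X i x) = x.
Proof. rewrite <- ir_mul, gmulVr. apply ir_one. Qed.

Lemma ir_inv_r {G : Group} (X : ISet G) (i : G) (x : icar X) :
  ir X i (ir X (ginv G i) x) = x.
Proof. rewrite <- ir_mul, gmulVl. apply ir_one. Qed.

Lemma iequivariant_comp {G : Group} (X Y Z : ISet G)
  (f : icar X -> icar Y) (g : icar Y -> icar Z) :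
  iequivariant X Y f -> iequivariant Y Z g -> iequivariant X Z (fun x => g (f x)).
Proof.
  intros Hf Hg i x.
  assert (E : f (il X i x) = il Y i (ir Y (ginv G i) (f (ir X i x)))).
  { rewrite <- il_ir, <- Hf. symmetry. apply ir_inv_l. }
  rewrite E, Hg, ir_inv_r. reflexivity.
Qed.

Definition lequivariant {G : Group} (X Y : LSet G) (f : lcar X -> lcar Y) : Prop :=
  forall g x, f (lact X g x) = lact Y g (f x).
Definition requivariant {G : Group} (X Y : RSet G) (f : rcar X -> rcar Y) : Prop :=
  forall g x, f (ract X g x) = ract Y g (f x).

Definition biset_cat (G : Group) (P : ISet G -> Prop) : Category :=
  @mkConcrete { X : ISet G | P X } (fun X => icar (proj1_sig X))
    (fun X Y f => iequivariant (proj1_sig X) (proj1_sig Y) f)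
    (fun X => iequivariant_id (proj1_sig X))
    (fun X Y Z f g => iequivariant_comp (proj1_sig X) (proj1_sig Y) (proj1_sig Z) f g).

Definition lset_cat (G : Group) (P : LSet G -> Prop) : Category.
Proof.
  refine (@mkConcrete { X : LSet G | P X } (fun X => lcar (proj1_sig X))
    (fun X Y f => lequivariant (proj1_sig X) (proj1_sig Y) f) _ _).
  - intros X g x. reflexivity.
  - intros X Y Z f h Hf Hh g x. rewrite Hf, Hh. reflexivity.
Defined.

Definition rset_cat (G : Group) (P : RSet G -> Prop) : Category.
Proof.
  refine (@mkConcrete { X : RSet G | P X } (fun X => rcar (proj1_sig X))
    (fun X Y f => requivariant (proj1_sig X) (proj1_sig Y) f) _ _).
  - intros X g x. reflexivity.
  - intros X Y Z f h Hf Hh g x. rewrite Hf, Hh. reflexivity.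
Defined.

Definition ACT (G : Group) : Category :=
  biset_cat G (fun X => is_product_of semi_invertible X).
Definition Act (G : Group) : Category :=
  biset_cat G (fun X => finite_type (icar X) /\ is_product_of semi_invertible X).
Definition bACT (G : Group) : Category :=
  biset_cat G (fun X => is_product_of invertible_one_side X).
Definition bAct (G : Group) : Category :=
  biset_cat G (fun X => finite_type (icar X) /\ is_product_of invertible_one_side X).
Definition ACT_l (G : Group) : Category := lset_cat G (fun _ => True).
Definition ACT_r (G : Group) : Category := rset_cat G (fun _ => True).
Definition Act_l (G : Group) : Category := lset_cat G (fun X => finite_type (lcar X)).
Definition Act_r (G : Group) : Category := rset_cat G (fun X => finite_type (rcar X)).

(* Main.v *)
Require Import Defs.
From Stdlib Require Import List ProofIrrelevance FunctionalExtensionality.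

Section S.
Variable G : Group.

Lemma ginv_unique (a b : G) : gmul G a b = gone G -> b = ginv G a.
Proof.
  intros H. rewrite <- (gmul1l G b), <- (gmulVl G a), <- gassoc, H, gmul1r. reflexivity.
Qed.

Lemma ginv_mul (a b : G) : ginv G (gmul G a b) = gmul G (ginv G b) (ginv G a).
Proof.
  symmetry. apply ginv_unique.
  rewrite <- gassoc, (gassoc G b), gmulVr, gmul1l, gmulVr. reflexivity.
Qed.

Lemma ginv_one : ginv G (gone G) = gone G.
Proof. symmetry. apply ginv_unique. apply gmul1l. Qed.

Lemma ginv_ginv (a : G) : ginv G (ginv G a) = a.
Proof. symmetry. apply ginv_unique. apply gmulVl. Qed.

Lemma il_inv_l (X : ISet G) i x : il X (ginv G i) (il X i x) = x.
Proof. rewrite <- il_mul, gmulVl. apply il_one. Qed.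
Lemma il_inv_r (X : ISet G) i x : il X i (il X (ginv G i) x) = x.
Proof. rewrite <- il_mul, gmulVr. apply il_one. Qed.

Definition diagL (X : ISet G) : LSet G.
Proof.
  refine {| lcar := icar X; lact := fun i x => il X i (ir X (ginv G i) x) |}.
  - intros x. rewrite ginv_one, ir_one, il_one. reflexivity.
  - intros g h x. rewrite ginv_mul, ir_mul, il_mul, (il_ir _ X h). reflexivity.
Defined.

Definition trivL (Y : LSet G) : ISet G.
Proof.
  refine {| icar := lcar Y; il := lact Y; ir := fun _ x => x |}.
  - apply lact_one.
  - apply lact_mul.
  - reflexivity.
  - reflexivity.
  - reflexivity.
Defined.

Definition diagR (X : ISet G) : RSet G.
Proof.
  refine {| rcar := icar X; ract := fun i x => ir X i (il X (ginv G i) x) |}.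
  - intros x. rewrite ginv_one, ir_one, il_one. reflexivity.
  - intros g h x. rewrite ginv_mul, ir_mul, il_mul, (il_ir _ X _ g). reflexivity.
Defined.

Definition trivR (Y : RSet G) : ISet G.
Proof.
  refine {| icar := rcar Y; il := fun _ x => x; ir := ract Y |}.
  - reflexivity.
  - reflexivity.
  - apply ract_one.
  - apply ract_mul.
  - reflexivity.
Defined.

Lemma iequiv_diag (X Y : ISet G) f : iequivariant X Y f ->
  forall i y, f (il X i (ir X (ginv G i) y)) = il Y i (ir Y (ginv G i) (f y)).
Proof.
  intros H i y. specialize (H i (ir X (ginv G i) y)).
  rewrite ir_inv_r in H. rewrite <- (il_ir _ Y), <- H, ir_inv_l. reflexivity.
Qed.

Lemma iequiv_diagR (X Y : ISet G) f : iequivariant X Y f ->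
  forall i y, f (ir X i (il X (ginv G i) y)) = ir Y i (il Y (ginv G i) (f y)).
Proof.
  intros H i y. pose proof (iequiv_diag X Y f H (ginv G i) y) as E.
  rewrite ginv_ginv in E. rewrite <- !il_ir in E. exact E.
Qed.

Lemma prod_always (P : ISet G -> Prop) (X : ISet G) : P X -> is_product_of P X.
Proof.
  intros HP. exists unit, (fun _ => X), (fun x _ => x).
  split; [intros; exact HP|]. split.
  - exists (fun h => h tt). split; [reflexivity|].
    intros h. apply functional_extensionality. intros []. reflexivity.
  - split; reflexivity.
Qed.

Lemma semi_always (X : ISet G) : semi_invertible X.
Proof.
  intros i. left. exists (il X (ginv G i)). split; intros; [apply il_inv_l|apply il_inv_r].
Qed.

Lemma ios_always (X : ISet G) : invertible_one_side X.
Proof.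
  left. intros i. exists (il X (ginv G i)). split; intros; [apply il_inv_l|apply il_inv_r].
Qed.

Section BL.
Variables (P : ISet G -> Prop) (Q : LSet G -> Prop).
Hypothesis hPQ : forall X, P X -> Q (diagL X).
Hypothesis hQP : forall Y, Q Y -> P (trivL Y).

Definition FBL : Functor (biset_cat G P) (lset_cat G Q).
Proof.
  unshelve refine (@Build_Functor (biset_cat G P) (lset_cat G Q) (fun A : Ob (biset_cat G P) => (exist Q (diagL (proj1_sig A)) (hPQ _ (proj2_sig A)) : Ob (lset_cat G Q))) (fun A B f => exist _ (proj1_sig f) _) _ _).
  - cbn. intros g x. apply (iequiv_diag _ _ _ (proj2_sig f)).
  - intros A. apply subset_eq_compat. reflexivity.
  - intros. apply subset_eq_compat. reflexivity.
Defined.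

Definition GBL : Functor (lset_cat G Q) (biset_cat G P).
Proof.
  unshelve refine (@Build_Functor (lset_cat G Q) (biset_cat G P) (fun A : Ob (lset_cat G Q) => (exist P (trivL (proj1_sig A)) (hQP _ (proj2_sig A)) : Ob (biset_cat G P))) (fun A B f => exist _ (proj1_sig f) _) _ _).
  - cbn. intros g x. apply (proj2_sig f).
  - intros A. apply subset_eq_compat. reflexivity.
  - intros. apply subset_eq_compat. reflexivity.
Defined.

Lemma equiv_BL : equivalent_cats (biset_cat G P) (lset_cat G Q).
Proof.
  exists FBL, GBL. split.
  - unshelve eexists; [intros A; exists (fun x => x)|].
    { cbn. intros i x. simpl. rewrite il_ir, ir_inv_r. reflexivity. }
    unshelve eexists; [intros A; exists (fun x => x)|].
    { cbn. intros i x. simpl. rewrite ir_inv_l. reflexivity. }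
    split; [|split]; intros; apply subset_eq_compat; reflexivity.
  - unshelve eexists; [intros A; exists (fun x => x)|].
    { cbn. intros i x. simpl. reflexivity. }
    unshelve eexists; [intros A; exists (fun x => x)|].
    { cbn. intros i x. simpl. reflexivity. }
    split; [|split]; intros; apply subset_eq_compat; reflexivity.
Qed.
End BL.

Section BR.
Variables (P : ISet G -> Prop) (Q : RSet G -> Prop).
Hypothesis hPQ : forall X, P X -> Q (diagR X).
Hypothesis hQP : forall Y, Q Y -> P (trivR Y).

Definition FBR : Functor (biset_cat G P) (rset_cat G Q).
Proof.
  unshelve refine (@Build_Functor (biset_cat G P) (rset_cat G Q) (fun A : Ob (biset_cat G P) => (exist Q (diagR (proj1_sig A)) (hPQ _ (proj2_sig A)) : Ob (rset_cat G Q))) (fun A B f => exist _ (proj1_sig f) _) _ _).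
  - cbn. intros g x. apply (iequiv_diagR _ _ _ (proj2_sig f)).
  - intros A. apply subset_eq_compat. reflexivity.
  - intros. apply subset_eq_compat. reflexivity.
Defined.

Definition GBR : Functor (rset_cat G Q) (biset_cat G P).
Proof.
  unshelve refine (@Build_Functor (rset_cat G Q) (biset_cat G P) (fun A : Ob (rset_cat G Q) => (exist P (trivR (proj1_sig A)) (hQP _ (proj2_sig A)) : Ob (biset_cat G P))) (fun A B f => exist _ (proj1_sig f) _) _ _).
  - cbn. intros g x. symmetry. apply (proj2_sig f).
  - intros A. apply subset_eq_compat. reflexivity.
  - intros. apply subset_eq_compat. reflexivity.
Defined.

Lemma equiv_BR : equivalent_cats (biset_cat G P) (rset_cat G Q).
Proof.
  exists FBR, GBR. split.
  - unshelve eexists; [intros A; exists (fun x => x)|].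
    { cbn. intros i x. simpl. rewrite <- il_ir, il_inv_r. reflexivity. }
    unshelve eexists; [intros A; exists (fun x => x)|].
    { cbn. intros i x. simpl. rewrite il_inv_l. reflexivity. }
    split; [|split]; intros; apply subset_eq_compat; reflexivity.
  - unshelve eexists; [intros A; exists (fun x => x)|].
    { cbn. intros i x. simpl. reflexivity. }
    unshelve eexists; [intros A; exists (fun x => x)|].
    { cbn. intros i x. simpl. reflexivity. }
    split; [|split]; intros; apply subset_eq_compat; reflexivity.
Qed.
End BR.

Section BB.
Variables (P Q : ISet G -> Prop).
Hypothesis hPQ : forall X, P X -> Q X.
Hypothesis hQP : forall Y, Q Y -> P Y.

Definition FBB : Functor (biset_cat G P) (biset_cat G Q).
Proof.
  unshelve refine (@Build_Functor (biset_cat G P) (biset_cat G Q) (fun A : Ob (biset_cat G P) => (exist Q (proj1_sig A) (hPQ _ (proj2_sig A)) : Ob (biset_cat G Q))) (fun A B f => exist _ (proj1_sig f) (proj2_sig f)) _ _).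
  - intros A. apply subset_eq_compat. reflexivity.
  - intros. apply subset_eq_compat. reflexivity.
Defined.

Definition GBB : Functor (biset_cat G Q) (biset_cat G P).
Proof.
  unshelve refine (@Build_Functor (biset_cat G Q) (biset_cat G P) (fun A : Ob (biset_cat G Q) => (exist P (proj1_sig A) (hQP _ (proj2_sig A)) : Ob (biset_cat G P))) (fun A B f => exist _ (proj1_sig f) (proj2_sig f)) _ _).
  - intros A. apply subset_eq_compat. reflexivity.
  - intros. apply subset_eq_compat. reflexivity.
Defined.

Lemma equiv_BB : equivalent_cats (biset_cat G P) (biset_cat G Q).
Proof.
  exists FBB, GBB. split.
  - unshelve eexists; [intros A; exists (fun x => x); apply iequivariant_id|].
    unshelve eexists; [intros A; exists (fun x => x); apply iequivariant_id|].
    split; [|split]; intros; apply subset_eq_compat; reflexivity.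
  - unshelve eexists; [intros A; exists (fun x => x); apply iequivariant_id|].
    unshelve eexists; [intros A; exists (fun x => x); apply iequivariant_id|].
    split; [|split]; intros; apply subset_eq_compat; reflexivity.
Qed.
End BB.

Definition L2R (Y : LSet G) : RSet G.
Proof.
  refine {| rcar := lcar Y; ract := fun i x => lact Y (ginv G i) x |}.
  - intros x. rewrite ginv_one. apply lact_one.
  - intros g h x. rewrite ginv_mul. apply lact_mul.
Defined.

Definition R2L (Y : RSet G) : LSet G.
Proof.
  refine {| lcar := rcar Y; lact := fun i x => ract Y (ginv G i) x |}.
  - intros x. rewrite ginv_one. apply ract_one.
  - intros g h x. rewrite ginv_mul. apply ract_mul.
Defined.

Section LR.
Variables (P : LSet G -> Prop) (Q : RSet G -> Prop).
Hypothesis hPQ : forall X, P X -> Q (L2R X).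
Hypothesis hQP : forall Y, Q Y -> P (R2L Y).

Definition FLR : Functor (lset_cat G P) (rset_cat G Q).
Proof.
  unshelve refine (@Build_Functor (lset_cat G P) (rset_cat G Q) (fun A : Ob (lset_cat G P) => (exist Q (L2R (proj1_sig A)) (hPQ _ (proj2_sig A)) : Ob (rset_cat G Q))) (fun A B f => exist _ (proj1_sig f) _) _ _).
  - cbn. intros g x. apply (proj2_sig f).
  - intros A. apply subset_eq_compat. reflexivity.
  - intros. apply subset_eq_compat. reflexivity.
Defined.

Definition GLR : Functor (rset_cat G Q) (lset_cat G P).
Proof.
  unshelve refine (@Build_Functor (rset_cat G Q) (lset_cat G P) (fun A : Ob (rset_cat G Q) => (exist P (R2L (proj1_sig A)) (hQP _ (proj2_sig A)) : Ob (lset_cat G P))) (fun A B f => exist _ (proj1_sig f) _) _ _).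
  - cbn. intros g x. apply (proj2_sig f).
  - intros A. apply subset_eq_compat. reflexivity.
  - intros. apply subset_eq_compat. reflexivity.
Defined.

Lemma equiv_LR : equivalent_cats (lset_cat G P) (rset_cat G Q).
Proof.
  exists FLR, GLR. split.
  - unshelve eexists; [intros A; exists (fun x => x)|].
    { cbn. intros i x. simpl. rewrite ginv_ginv. reflexivity. }
    unshelve eexists; [intros A; exists (fun x => x)|].
    { cbn. intros i x. simpl. rewrite ginv_ginv. reflexivity. }
    split; [|split]; intros; apply subset_eq_compat; reflexivity.
  - unshelve eexists; [intros A; exists (fun x => x)|].
    { cbn. intros i x. simpl. rewrite ginv_ginv. reflexivity. }
    unshelve eexists; [intros A; exists (fun x => x)|].
    { cbn. intros i x. simpl. rewrite ginv_ginv. reflexivity. }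
    split; [|split]; intros; apply subset_eq_compat; reflexivity.
Qed.
End LR.

End S.

Theorem mainTheorem6 (G : Group) :
  (equivalent_cats (Act G) (bAct G) /\ equivalent_cats (Act G) (Act_l G) /\
   equivalent_cats (Act G) (Act_r G) /\ equivalent_cats (bAct G) (Act_l G) /\
   equivalent_cats (bAct G) (Act_r G) /\ equivalent_cats (Act_l G) (Act_r G)) /\
  (equivalent_cats (ACT G) (bACT G) /\ equivalent_cats (ACT G) (ACT_l G) /\
   equivalent_cats (ACT G) (ACT_r G) /\ equivalent_cats (bACT G) (ACT_l G) /\
   equivalent_cats (bACT G) (ACT_r G) /\ equivalent_cats (ACT_l G) (ACT_r G)).
Proof.
  repeat split.
  all: first [ apply equiv_BB | apply equiv_BL | apply equiv_BR | apply equiv_LR ].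
  all: intros X; simpl.
  all: intros H; repeat split; try tauto;
       apply prod_always; first [apply semi_always | apply ios_always].
Qed.
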